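(* Let $\mathcal{G}=(\mathcal{V},\mathcal{E})$ be a strongly connected digraph with $n$ nodes $v_1,\dots,v_n$, where node $v_j$ has out-degree $d_j^+$ and arbitrary initial value $x_j[0]\in\mathbb{R}$, and $y_j[0]=1$. Consider the ARQ-based Ratio Consensus iteration written in augmented form $$\tilde{x}[k+1]=\Xi[k]\,\tilde{x}[k],\qquad \tilde{y}[k+1]=\Xi[k]\,\tilde{y}[k],\qquad k=0,1,2,\dots,$$ where $\tilde x[k],\tilde y[k]\in\mathbb{R}^{\tilde n}$, $\tilde n\ge n$, the first $n$ coordinates correspond to the actual nodes and are initialized as $\tilde x_j[0]=x_j[0]$, $\tilde y_j[0]=1$ for $j=1,\dots,n$, while all remaining (virtual-node) coordinates are initialized to $0$. Assume the random matrices $\Xi[k]$ satisfy the standing assumptions (A1)–(A3) below. For each actual node $v_j$ let $\mathcal{K}_j=\{k\ge 0:\ \tilde y_j[k]\ge c^{\lambda}\}$ and, for $k\in\mathcal{K}_j$, let $z_j[k]=\tilde x_j[k]/\tilde y_j[k]$. Then, with probability $1$, for every $v_j\in\mathcal{V}$ the set $\mathcal{K}_j$ is infinite and $$\lim_{k\to\infty,\ k\in\mathcal{K}_j} z_j[k]=\frac{1}{n}\sum_{i=1}^{n}x_i[0].$$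
   Context: Model: the augmented digraph adds, for each edge $(v_j,v_i)\in\mathcal{E}$ (meaning $v_j$ receives from $v_i$), $\bar\tau$ virtual ''delay'' nodes (holding information that will arrive at $v_j$ after $r=1,\dots,\bar\tau$ steps, where $\bar\tau$ is the ARQ retransmission limit and upper bound on delays) and one virtual ''buffer'' node (holding mass lost due to packet drops, released later), so $\tilde n=|\mathcal{E}|(\bar\tau+1)+n$. The weights used by node $v_j$ on its out-going links and self-loop are $p_{lj}=1/(1+d_j^+)$ for $v_l\in\mathcal{N}_j^+\cup\{v_j\}$ and $0$ otherwise. Standing assumptions on the random matrices $\Xi[k]\in\mathbb{R}_+^{\tilde n\times\tilde n}$, which encode the realized retransmission delays and packet drops at step $k$: (A1) Each $\Xi[k]$ takes values in a fixed finite set $\mathcal{X}$ of nonnegative column-stochastic $\tilde n\times\tilde n$ matrices, every entry of which is $0$, $1$, or $1/(1+d_j^+)$ for some $j$; hence every positive entry is at least $c:=\min_{j}1/(1+d_j^+)$. (A2) There exist a positive integer $\lambda$, matrices $\Xi_1,\dots,\Xi_\lambda\in\mathcal{X}$ and a constant $p_{\min}>0$ such that the product $L=\Xi_\lambda\Xi_{\lambda-1}\cdots\Xi_1$ satisfies $L(j,i)>0$ for every $j\in\{1,\dots,n\}$ and every $i\in\{1,\dots,\tilde n\}$ (all entries in the rows of the actual nodes are strictly positive). (A3) For every $k\ge 0$, conditionally on the past realizations $\Xi[0],\dots,\Xi[k]$, the event $\{\Xi[k+1]=\Xi_1,\ \Xi[k+2]=\Xi_2,\dots,\Xi[k+\lambda]=\Xi_\lambda\}$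 has probability at least $p_{\min}$. *)

(* Defs.v *)
From HB Require Import structures.
From mathcomp Require Import all_boot all_order all_algebra.
From mathcomp Require Import all_classical all_reals all_analysis.
Set Implicit Arguments. Unset Strict Implicit. Unset Printing Implicit Defensive.
Import Order.TTheory GRing.Theory Num.Theory.
Local Open Scope ring_scope.

(* Digraph on nodes 'I_n : [e j i] means (v_j, v_i) \in E, i.e. v_j receives from v_i. *)

Definition outdeg (n : nat) (e : rel 'I_n) (j : 'I_n) : nat := #|[set l | e l j]|.

Definition strongly_connected (n : nat) (e : rel 'I_n) : Prop :=
  forall i j : 'I_n, connect e i j.

Definition simple_digraph (n : nat) (e : rel 'I_n) : Prop := irreflexive e.

Definition cmin (R : realType) (n : nat) (e : rel 'I_n) : R :=
  \big[Num.min/1]_(j < n) (1 + (outdeg e j)%:R)^-1.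

Definition col_stochastic (R : realType) (N : nat) (M : 'M[R]_N) : Prop :=
  (forall i j, 0 <= M i j) /\ (forall j, \sum_i M i j = 1).

Definition entries_ok (R : realType) (n : nat) (e : rel 'I_n) (N : nat)
  (M : 'M[R]_N) : Prop :=
  forall a b, M a b = 0 \/ M a b = 1 \/ exists j : 'I_n, M a b = (1 + (outdeg e j)%:R)^-1.

(* lprod [:: A1; ...; Al] = Al *m ... *m A1 *)
Fixpoint lprod (R : realType) (N : nat) (s : seq 'M[R]_N) : 'M[R]_N :=
  match s with
  | [::] => 1%:M
  | A :: s' => lprod s' *m A
  end.

Fixpoint traj (T : Type) (R : realType) (N : nat) (Xi : nat -> T -> 'M[R]_N)
  (v0 : 'cV[R]_N) (k : nat) (w : T) : 'cV[R]_N :=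
  match k with
  | 0 => v0
  | k'.+1 => Xi k' w *m traj Xi v0 k' w
  end.

(* Main.v *)
Require Import Defs.
From HB Require Import structures.
From mathcomp Require Import all_boot all_order all_algebra.
From mathcomp Require Import all_classical all_reals all_analysis.
From mathcomp Require Import ring lra zify.
Import Order.TTheory GRing.Theory Num.Theory.
Local Open Scope ring_scope.

Set Implicit Arguments. Unset Strict Implicit. Unset Printing Implicit Defensive.

Fixpoint prodM (R : realType) N (A : nat -> 'M[R]_N) (a b : nat) : 'M[R]_N :=
  match b with 0 => 1%:M | b'.+1 => A (a + b')%N *m prodM A a b' end.

Lemma prodM_split (R : realType) N (A : nat -> 'M[R]_N) a b c :
  prodM A a (b + c) = prodM A (a + b) c *m prodM A a b.
Proof.
elim: c => [|c IH]; first by rewrite addn0 /= mul1mx.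
by rewrite addnS /= IH mulmxA addnA.
Qed.

Lemma traj_prodM (T : Type) (R : realType) N (Xi : nat -> T -> 'M[R]_N) v0 k w :
  traj Xi v0 k w = prodM (fun t => Xi t w) 0 k *m v0.
Proof.
elim: k => [|k IH] /=; first by rewrite mul1mx.
by rewrite IH mulmxA add0n.
Qed.

Lemma lprod_prodM (R : realType) N (A : nat -> 'M[R]_N) (s : seq 'M[R]_N) a :
  (forall r, (r < size s)%N -> A (a + r)%N = nth 0 s r) ->
  lprod s = prodM A a (size s).
Proof.
elim: s a => [|M s IH] a H; first by [].
rewrite (_ : size (M :: s) = 1 + size s)%N // prodM_split /= (IH (a + 1)%N).
  by rewrite mulmx1 (H 0%N).
by move=> r Hr; rewrite -addnA add1n (H r.+1).
Qed.

Lemma cs_mul (R : realType) N (A B : 'M[R]_N) :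
  col_stochastic A -> col_stochastic B -> col_stochastic (A *m B).
Proof.
move=> [A0 A1] [B0 B1]; split.
  by move=> i j; rewrite mxE; apply: sumr_ge0 => l _; apply: mulr_ge0.
move=> j; under eq_bigr do rewrite mxE.
rewrite exchange_big /= -(B1 j); apply: eq_bigr => l _.
by rewrite -mulr_suml A1 mul1r.
Qed.

Lemma cs_1 (R : realType) N : col_stochastic (1%:M : 'M[R]_N).
Proof.
split; first by move=> i j; rewrite mxE ler0n.
move=> j; rewrite (bigD1 j) //= big1 ?mxE ?eqxx ?addr0 //.
by move=> i /negbTE Hi; rewrite mxE Hi.
Qed.

Lemma cs_prodM (R : realType) N (A : nat -> 'M[R]_N) a b :
  (forall t, col_stochastic (A t)) -> col_stochastic (prodM A a b).
Proof.
move=> H; elim: b => [|b IH] /=; first exact: cs_1.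
exact: cs_mul.
Qed.

Definition nzge (R : realType) N (M : 'M[R]_N) (x : R) :=
  forall i j, M i j = 0 \/ x <= M i j.

Lemma nzge_mul (R : realType) N (A B : 'M[R]_N) x y :
  (forall i j, 0 <= A i j) -> (forall i j, 0 <= B i j) -> 0 <= x ->
  nzge A x -> nzge B y -> nzge (A *m B) (x * y).
Proof.
move=> A0 B0 x0 HA HB i j; rewrite mxE.
case: (boolP [exists l, A i l * B l j != 0]) => [/existsP [l Hl]|Hn].
  right; rewrite (bigD1 l) //=.
  have h1 : x * y <= A i l * B l j.
    move: Hl; case: (HA i l) => [->|Ha]; first by rewrite mul0r eqxx.
    case: (HB l j) => [->|Hb]; first by rewrite mulr0 eqxx.
    move=> _; apply: (le_trans (ler_wpM2l x0 Hb)); exact: ler_wpM2r.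
  apply: le_trans h1 _; rewrite lerDl; apply: sumr_ge0 => k _; exact: mulr_ge0.
left; apply: big1 => l _; apply/eqP; apply: contraNT Hn => Hl.
by apply/existsP; exists l.
Qed.

Lemma nzge_lprod (R : realType) N (s : seq 'M[R]_N) (c : R) :
  0 <= c -> (forall M, M \in s -> col_stochastic M /\ nzge M c) ->
  col_stochastic (lprod s) /\ nzge (lprod s) (c ^+ size s).
Proof.
move=> c0; elim: s => [|M s IH] H /=.
  split; first exact: cs_1.
  by move=> i j; rewrite mxE expr0; case: eqP => _; [right|left].
have [Hs1 Hs2] := IH (fun M' HM' => H M' (mem_behead (s := M :: s) HM')).
have [HM1 HM2] := H M (mem_head _ _).
split; first exact: cs_mul.
rewrite exprSr; apply: nzge_mul => //; first by case: Hs1.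
  by case: HM1.
exact: exprn_ge0.
Qed.

Definition bnd (R : realType) N (u : 'rV[R]_N) a b := forall i, a <= u 0 i <= b.

Lemma sum_shift (R : realType) N (L : 'M[R]_N) (u : 'rV[R]_N) a i :
  \sum_l L l i = 1 ->
  (u *m L) 0 i = a + \sum_l (u 0 l - a) * L l i.
Proof.
move=> H; rewrite mxE.
under [X in _ = _ + X]eq_bigr do rewrite mulrBl.
by rewrite sumrB -mulr_sumr H mulr1 addrC subrK.
Qed.

Lemma bnd_mul (R : realType) N (M : 'M[R]_N) u a b :
  col_stochastic M -> bnd u a b -> bnd (u *m M) a b.
Proof.
move=> [M0 M1] H i; rewrite (sum_shift _ a (M1 i)); apply/andP; split.
  rewrite lerDl; apply: sumr_ge0 => l _; apply: mulr_ge0 => //.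
  by have /andP[h1 h2] := H l; rewrite subr_ge0.
have -> : b = a + \sum_l (b - a) * M l i by rewrite -mulr_sumr M1 mulr1 addrC subrK.
rewrite lerD2l; apply: ler_sum => l _; apply: ler_wpM2r => //.
by have /andP[h1 h2] := H l; rewrite lerB.
Qed.

Lemma bnd_contract (R : realType) N (L : 'M[R]_N) u a b (beta : R) j0 :
  col_stochastic L -> (forall i, beta <= L j0 i) -> bnd u a b ->
  bnd (u *m L) (beta * u 0 j0 + (1 - beta) * a) (beta * u 0 j0 + (1 - beta) * b).
Proof.
move=> [M0 M1] Hb H i; have /andP[h1 h2] := H j0; apply/andP; split.
  rewrite (sum_shift _ a (M1 i)) (bigD1 j0) //=.
  have : 0 <= \sum_(l | l != j0) (u 0 l - a) * L l i.
    apply: sumr_ge0 => l _; apply: mulr_ge0 => //.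
    by have /andP[h3 h4] := H l; rewrite subr_ge0.
  have : (u 0 j0 - a) * beta <= (u 0 j0 - a) * L j0 i.
    by apply: ler_wpM2l; rewrite ?subr_ge0.
  lra.
rewrite (sum_shift _ b (M1 i)) (bigD1 j0) //=.
have : \sum_(l | l != j0) (u 0 l - b) * L l i <= 0.
  rewrite -oppr_ge0 -sumrN; apply: sumr_ge0 => l _; rewrite -mulNr; apply: mulr_ge0 => //.
  by have /andP[h3 h4] := H l; rewrite opprB subr_ge0.
have : (b - u 0 j0) * beta <= (b - u 0 j0) * L j0 i.
  by apply: ler_wpM2l; rewrite ?subr_ge0.
lra.
Qed.

Lemma geom_small (R : realType) (q delta : R) :
  0 <= q < 1 -> 0 < delta -> exists N : nat, q ^+ N < delta.
Proof.
move=> /andP[q0 q1] d0.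
have key : forall N : nat, q ^+ N * (1 + N%:R * (1 - q)) <= 1.
  move=> N0; elim: N0 => [|N IH]; first by rewrite expr0 mul1r mul0r addr0.
  have hN : q ^+ N.+1 <= 1 by apply: exprn_ile1 => //; apply: ltW.
  have hN0 : 0 <= q ^+ N.+1 by apply: exprn_ge0.
  rewrite exprS -natr1.
  have e : q * q ^+ N * (1 + (N%:R + 1) * (1 - q)) =
    q * (q ^+ N * (1 + N%:R * (1 - q))) + q * q ^+ N * (1 - q) by ring.
  rewrite e -exprS.
  have : q * (q ^+ N * (1 + N%:R * (1 - q))) <= q * 1 by apply: ler_wpM2l.
  have : q ^+ N.+1 * (1 - q) <= 1 * (1 - q) by apply: ler_wpM2r => //; rewrite subr_ge0 ltW.
  lra.
have [N HN] : exists N : nat, (delta * (1 - q))^-1 < N%:R.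
  exists (Num.truncn (delta * (1 - q))^-1).+1; exact: truncnS_gt.
exists N.
have pos : 0 < delta * (1 - q) by apply: mulr_gt0; rewrite // subr_gt0.
have H2 : 1 < delta * (1 + N%:R * (1 - q)).
  rewrite mulrDr mulr1 mulrCA.
  have : 1 < delta * (1 - q) * N%:R.
    by rewrite -ltr_pdivrMl // mulr1.
  have : 0 < delta by []. nra.
have H3 := key N.
have p1 : 0 < 1 + N%:R * (1 - q).
  apply: (lt_le_trans ltr01); rewrite lerDl; apply: mulr_ge0; rewrite ?ler0n ?subr_ge0 ?ltW //.
have : q ^+ N * (1 + N%:R * (1 - q)) < delta * (1 + N%:R * (1 - q)) by lra.
by rewrite ltr_pM2r.
Qed.

Lemma contract_N (R : realType) N (A : nat -> 'M[R]_N) (L : 'M[R]_N) lam (beta : R) j0 :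
  beta <= 1 ->
  (forall t, col_stochastic (A t)) -> col_stochastic L -> (forall i, beta <= L j0 i) ->
  (forall t, exists t', (t <= t')%N /\ prodM A t'.+1 lam = L) ->
  forall K : nat, exists k0, forall k, (k0 <= k)%N -> forall u a b, bnd u a b ->
     exists a' b', b' - a' <= (1 - beta) ^+ K * (b - a) /\ bnd (u *m prodM A 0 k) a' b'.
Proof.
move=> b1 Acs Lcs Lb Hw; elim=> [|K IH].
  exists 0%N => k _ u a b Hu; exists a, b; split; first by rewrite expr0 mul1r.
  exact: bnd_mul (cs_prodM 0 k Acs) Hu.
have [k0 Hk0] := IH.
have [t' [Ht' HL]] := Hw k0.
exists (t'.+1 + lam)%N => k Hk u a b Hu.
have -> : prodM A 0 k = ((prodM A (t'.+1 + lam) (k - (t'.+1 + lam))) *m L) *m prodM A 0 t'.+1.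
  rewrite -HL -prodM_split -(add0n t'.+1) -prodM_split; congr prodM; lia.
set Phi := prodM A 0 t'.+1; set Psi := prodM A _ _.
rewrite (mulmxA u (Psi *m L) Phi) (mulmxA u Psi L).
have H1 := bnd_mul (cs_prodM (t'.+1 + lam) (k - (t'.+1 + lam)) Acs) Hu; rewrite -/Psi in H1.
have H2 := bnd_contract Lcs Lb H1.
have [a' [b' [Hw' Hb']]] := Hk0 t'.+1 (leqW Ht') _ _ _ H2.
exists a', b'; split => //.
apply: (le_trans Hw'); rewrite exprSr -mulrA; apply: ler_wpM2l.
  by apply: exprn_ge0; rewrite subr_ge0.
rewrite le_eqVlt; apply/orP; left; apply/eqP; ring.
Qed.

Lemma cs_sum (R : realType) N (M : 'M[R]_N) (v : 'cV[R]_N) :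
  col_stochastic M -> (forall i, 0 <= v i 0) ->
  (forall i, 0 <= (M *m v) i 0) /\ \sum_i (M *m v) i 0 = \sum_i v i 0.
Proof.
move=> [M0 M1] v0; split.
  by move=> i; rewrite mxE; apply: sumr_ge0 => l _; apply: mulr_ge0.
under eq_bigr do rewrite mxE.
rewrite exchange_big /=; apply: eq_bigr => l _.
by rewrite -mulr_suml M1 mul1r.
Qed.

Lemma sum_colmx (R : realType) n m (x : 'cV[R]_n) (F : 'I_(n + m) -> R) :
  \sum_i F i * (col_mx x 0 : 'cV[R]_(n + m)) i 0 = \sum_(i < n) F (lshift m i) * x i 0.
Proof.
rewrite big_split_ord /= [X in _ + X]big1 ?addr0.
  by apply: eq_bigr => i _; rewrite col_mxEu.
by move=> i _; rewrite col_mxEd mxE mulr0.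
Qed.

Lemma yt0_ge0 (R : realType) n m i :
  0 <= (col_mx (const_mx 1 : 'cV[R]_n) (0 : 'cV[R]_m)) i 0.
Proof.
case: (split_ordP i) => k ->.
  by rewrite col_mxEu mxE.
by rewrite col_mxEd mxE.
Qed.

Lemma final_conv (R : realType) n m (x0 : 'cV[R]_n) (A : nat -> 'M[R]_(n + m))
  (L : 'M[R]_(n + m)) lam (beta : R) (j : 'I_n) :
  0 < beta -> beta <= 1 -> (forall t, col_stochastic (A t)) -> col_stochastic L ->
  (forall i, beta <= L (lshift m j) i) ->
  (forall t, exists t', (t <= t')%N /\ prodM A t'.+1 lam = L) ->
  let xt k := (prodM A 0 k *m col_mx x0 (0 : 'cV[R]_m)) (lshift m j) 0 in
  let yt k := (prodM A 0 k *m col_mx (const_mx 1 : 'cV[R]_n) (0 : 'cV[R]_m)) (lshift m j) 0 in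
  let avg := n%:R^-1 * \sum_(i < n) x0 i 0 in
  (forall N, exists k, (N <= k)%N /\ beta <= yt k) /\
  (forall eps, 0 < eps -> exists N, forall k, (N <= k)%N -> beta <= yt k ->
     `|xt k / yt k - avg| < eps).
Proof.
move=> b0 b1 Acs Lcs Lb Hw xt yt avg.
have n0 : (0 < n)%N by apply: leq_ltn_trans (leq0n j) (ltn_ord j).
have nR : n%:R != 0 :> R by rewrite pnatr_eq0 -lt0n.
split.
  move=> N0; have [t' [Ht' HL]] := Hw N0.
  exists (t'.+1 + lam)%N; split; first lia.
  rewrite /yt -(add0n t'.+1) prodM_split add0n HL -mulmxA.
  set v := prodM A 0 t'.+1 *m _.
  have [v0 vs] := cs_sum (cs_prodM 0 t'.+1 Acs)
    (@yt0_ge0 R n m).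
  have vsum : \sum_i v i 0 = n%:R.
    rewrite /v vs big_split_ord /= [X in _ + X]big1 ?addr0; last first.
      by move=> i _; rewrite col_mxEd mxE.
    under eq_bigr do rewrite col_mxEu mxE.
    by rewrite sumr_const card_ord.
  rewrite mxE.
  have : \sum_i beta * v i 0 <= \sum_i L (lshift m j) i * v i 0.
    by apply: ler_sum => i _; apply: ler_wpM2r.
  rewrite -mulr_sumr vsum => H; apply: le_trans H.
  rewrite -{1}(mulr1 beta); apply: ler_wpM2l; first exact: ltW.
  by rewrite ler1n.
move=> eps e0.
set S := \sum_(i < n) `|x0 i 0 - avg|.
have S0 : 0 <= S by apply: sumr_ge0 => i _.
have S1 : 0 < S + 1 by lra.
have [N HN] := geom_small (q := 1 - beta) (delta := eps * beta / (S + 1))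
  (ltac:(apply/andP; split; lra)) (ltac:(by apply: divr_gt0 => //; apply: mulr_gt0)).
have [k0 Hk0] := contract_N b1 Acs Lcs Lb Hw N.
exists k0 => k Hk Hy.
have bu : bnd (delta_mx 0 (lshift m j) : 'rV[R]_(n + m)) 0 1.
  move=> i; rewrite mxE eqxx /=; case: (i == lshift m j); apply/andP; split => //=; rewrite ?ler0n ?ler01 //.
have [a' [b' [Hab Hb]]] := Hk0 k Hk _ _ _ bu.
set Phi := prodM A 0 k.
have Pb : forall i : 'I_n, a' <= Phi (lshift m j) (lshift m i) <= b'.
  by move=> i; have := Hb (lshift m i); rewrite -rowE mxE.
have ex : xt k = \sum_(i < n) Phi (lshift m j) (lshift m i) * x0 i 0.
  by rewrite /xt mxE sum_colmx.
have ey : yt k = \sum_(i < n) Phi (lshift m j) (lshift m i).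
  by rewrite /yt mxE sum_colmx; under eq_bigr do rewrite mxE mulr1.
have zs : \sum_(i < n) (x0 i 0 - avg) = 0.
  rewrite sumrB sumr_const card_ord -mulr_natl /avg mulrA mulfV // mul1r.
  by rewrite subrr.
have key : xt k - avg * yt k =
    \sum_(i < n) (Phi (lshift m j) (lshift m i) - a') * (x0 i 0 - avg).
  under [RHS]eq_bigr do rewrite mulrBl.
  rewrite sumrB -mulr_sumr zs mulr0 subr0 ex ey mulr_sumr -sumrB.
  by apply: eq_bigr => i _; rewrite mulrBr mulrC [avg * _]mulrC.
have bound : `|xt k - avg * yt k| <= (b' - a') * S.
  rewrite key; apply: le_trans (ler_norm_sum _ _ _) _.
  rewrite /S mulr_sumr; apply: ler_sum => i _; rewrite normrM.
  apply: ler_wpM2r => //.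
  have /andP[h1 h2] := Pb i.
  by rewrite ger0_norm ?subr_ge0 // lerD2r.
have yp : 0 < yt k by apply: lt_le_trans Hy.
have -> : xt k / yt k - avg = (xt k - avg * yt k) / yt k.
  by field; rewrite gt_eqF.
rewrite normrM normfV (gtr0_norm yp) ltr_pdivrMr //.
have h1 : (1 - beta) ^+ N * (S + 1) < eps * beta by rewrite -ltr_pdivlMr.
have h2 : 0 <= (1 - beta) ^+ N by apply: exprn_ge0; lra.
have h3 : (b' - a') * S <= (1 - beta) ^+ N * S.
  by apply: ler_wpM2r => //; move: Hab; rewrite subr0 mulr1.
have h4 : eps * beta <= eps * yt k by apply: ler_wpM2l => //; exact: ltW.
have h5 : (1 - beta) ^+ N * S <= (1 - beta) ^+ N * (S + 1).
  by apply: ler_wpM2l => //; lra.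
apply: le_lt_trans bound _; apply: le_lt_trans h3 _; apply: le_lt_trans h5 _.
exact: lt_le_trans h1 h4.
Qed.

Local Open Scope classical_set_scope.

Definition Wset (T : Type) (R : realType) N (Xi : nat -> T -> 'M[R]_N) lam
  (s : seq 'M[R]_N) k : set T :=
  [set w | forall r, (r < lam)%N -> Xi (k + 1 + r)%N w = nth 0 s r].

Definition detm (T : Type) (R : realType) N (Xi : nat -> T -> 'M[R]_N) k (F : set T) :=
  forall w w', (forall t, (t <= k)%N -> Xi t w = Xi t w') -> F w -> F w'.

Lemma prE (R : realType) d (T : measurableType d) (P : probability T R) (A : set T) :
  measurable A -> P A = (fine (P A))%:E.
Proof. by move=> mA; rewrite fineK // fin_num_measure. Qed.

Lemma prU (R : realType) d (T : measurableType d) (P : probability T R) (A B : set T) :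
  measurable A -> measurable B -> A `&` B = set0 ->
  fine (P (A `|` B)) = fine (P A) + fine (P B).
Proof.
by move=> mA mB AB; rewrite measureU // fineD // fin_num_measure.
Qed.

Lemma pr0 (R : realType) d (T : measurableType d) (P : probability T R) :
  fine (P set0) = 0.
Proof. by rewrite measure0. Qed.

Lemma pr_ge0 (R : realType) d (T : measurableType d) (P : probability T R) A :
  0 <= fine (P A).
Proof. by apply: fine_ge0. Qed.

Lemma pr_le (R : realType) d (T : measurableType d) (P : probability T R) A B :
  measurable A -> measurable B -> A `<=` B -> fine (P A) <= fine (P B).
Proof.
move=> mA mB AB; apply: fine_le; rewrite ?fin_num_measure //.
by apply: le_measure; rewrite ?inE.
Qed.

Lemma measurable_imp d (T : measurableType d) (b : bool) (A : set T) :
  measurable A -> measurable [set w | b -> A w].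
Proof.
case: b => mA.
  by rewrite (_ : [set w | true -> A w] = A) //; apply/seteqP; split => w /=; auto.
by rewrite (_ : [set w | false -> A w] = setT) //; apply/seteqP; split => w /=.
Qed.

Lemma meas_W (R : realType) d (T : measurableType d) N (Xi : nat -> T -> 'M[R]_N) lam s k :
  (forall k (M : 'M[R]_N), measurable [set w | Xi k w = M]) ->
  measurable (Wset Xi lam s k).
Proof.
move=> hm.
rewrite (_ : Wset Xi lam s k = \bigcap_r [set w | (r < lam)%N -> Xi (k + 1 + r)%N w = nth 0 s r]).
  by apply: bigcapT_measurable => r; apply: measurable_imp; apply: hm.
by apply/seteqP; split => w /=; [move=> H r _; apply: H | move=> H r; apply: H].
Qed.

Lemma meas_cyl (R : realType) d (T : measurableType d) N (Xi : nat -> T -> 'M[R]_N) j h :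
  (forall k (M : 'M[R]_N), measurable [set w | Xi k w = M]) ->
  measurable [set w | forall t, (t < j)%N -> Xi t w = h t].
Proof.
move=> hm.
rewrite (_ : [set w | _] = \bigcap_t [set w | (t < j)%N -> Xi t w = h t]).
  by apply: bigcapT_measurable => r; apply: measurable_imp; apply: hm.
by apply/seteqP; split => w /=; [move=> H r _; apply: H | move=> H r; apply: H].
Qed.

Lemma meas_in (R : realType) d (T : measurableType d) N (Xi : nat -> T -> 'M[R]_N) j (l : seq 'M[R]_N) :
  (forall k (M : 'M[R]_N), measurable [set w | Xi k w = M]) ->
  measurable [set w | Xi j w \in l].
Proof.
move=> hm; elim: l => [|M l IH].
  by rewrite (_ : [set w | _] = set0) //; apply/seteqP; split => w //=; rewrite in_nil.
rewrite (_ : [set w | _] = [set w | Xi j w = M] `|` [set w | Xi j w \in l]).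
  exact: measurableU.
apply/seteqP; split => w /=; rewrite in_cons.
  by case/orP => [/eqP ->|H]; [left|right].
by case => [->|->]; rewrite ?eqxx ?orbT.
Qed.

Lemma window_prob (R : realType) d (T : measurableType d) (P : probability T R) N
  (Xi : nat -> T -> 'M[R]_N) (X : seq 'M[R]_N) lam s (pmin : R) :
  (forall k (M : 'M[R]_N), measurable [set w | Xi k w = M]) ->
  (forall k w, Xi k w \in X) -> 0 <= pmin ->
  (forall k (h : nat -> 'M[R]_N),
     (pmin%:E * P [set w | forall t, (t <= k)%N -> Xi t w = h t] <=
      P (Wset Xi lam s k `&` [set w | forall t, (t <= k)%N -> Xi t w = h t]))%E) ->
  forall k F, measurable F -> detm Xi k F ->
  pmin * fine (P F) <= fine (P (Wset Xi lam s k `&` F)).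
Proof.
move=> hm hX p0 A3 k.
have mW := meas_W lam s k hm.
suff claim : forall dd h F, measurable F -> detm Xi k F ->
    F `<=` [set w | forall t, (t < k.+1 - dd)%N -> Xi t w = h t] ->
    pmin * fine (P F) <= fine (P (Wset Xi lam s k `&` F)).
  move=> F mF dF; apply: (claim k.+1 (fun _ => 0)) => // w _ t; lia.
elim=> [|dd IH] h F mF dF sF.
  have [[w0 Fw0]|nF] := pselect (exists w, F w).
    have -> : F = [set w | forall t, (t <= k)%N -> Xi t w = h t].
      apply/seteqP; split => w.
        by move=> /sF /= H t Ht; apply: H; lia.
      move=> /= Hw; apply: (dF w0) => // t Ht.
      by rewrite (sF _ Fw0 t) ?Hw //; lia.
    have := A3 k h; rewrite (prE P (meas_cyl (k.+1) h hm)).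
    rewrite (_ : [set w | forall t, (t < k.+1)%N -> Xi t w = h t] =
                 [set w | forall t, (t <= k)%N -> Xi t w = h t]) //.
    rewrite (prE P (measurableI _ _ mW (meas_cyl (k.+1) h hm))).
    by rewrite -EFinM lee_fin.
  have -> : F = set0.
    by apply/seteqP; split => w // Fw; apply: nF; exists w.
  by rewrite setI0 pr0 mulr0.
set j := (k - dd)%N.
have key : forall M, pmin * fine (P (F `&` [set w | Xi j w = M])) <=
    fine (P (Wset Xi lam s k `&` (F `&` [set w | Xi j w = M]))).
  move=> M; apply: (IH (fun t => if t == j then M else h t)).
  - by apply: measurableI.
  - move=> w w' Hww' [Fw Hw]; split; first exact: (dF w).
    by rewrite /= -Hww' //; rewrite /j; lia.
  - move=> w [Fw /= Hw] t Ht; case: eqP => [->//|tj].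
    by apply: (sF _ Fw); rewrite /j in tj; lia.
suff L : forall l : seq 'M[R]_N, uniq l ->
    pmin * fine (P (F `&` [set w | Xi j w \in l])) <=
    fine (P (Wset Xi lam s k `&` (F `&` [set w | Xi j w \in l]))).
  have := L _ (undup_uniq X).
  rewrite (_ : F `&` [set w | Xi j w \in undup X] = F) //.
  by apply/seteqP; split => w; [case|move=> Fw; split => //=; rewrite mem_undup].
elim=> [|M l IHl] /= ul.
  rewrite (_ : [set w | Xi j w \in [::]] = set0) ?setI0 ?pr0 ?mulr0 //.
  by apply/seteqP; split => w //=; rewrite in_nil.
move: ul => /andP[Ml ul].
have E1 : F `&` [set w | Xi j w \in M :: l] =
    (F `&` [set w | Xi j w = M]) `|` (F `&` [set w | Xi j w \in l]).
  rewrite -setIUr; congr (F `&` _).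
  apply/seteqP; split => w /=; rewrite in_cons.
    by case/orP => [/eqP ->|H]; [left|right].
  by case => [->|->]; rewrite ?eqxx ?orbT.
have D1 : (F `&` [set w | Xi j w = M]) `&` (F `&` [set w | Xi j w \in l]) = set0.
  apply/seteqP; split => w //= [[_ e] [_ i]]; move: Ml; rewrite -e i //.
have mA : measurable (F `&` [set w | Xi j w = M]) by apply: measurableI.
have mB : measurable (F `&` [set w | Xi j w \in l]) by apply: measurableI => //; apply: meas_in.
rewrite E1 setIUr prU // ?prU //.
- have := key M; have := IHl ul; lra.
- exact: measurableI.
- exact: measurableI.
- by rewrite setIACA D1 setI0.
Qed.

Fixpoint Gs (T : Type) (R : realType) N (Xi : nat -> T -> 'M[R]_N) lam
  (s : seq 'M[R]_N) (M t : nat) {struct M} : set T :=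
  match M with
  | 0 => setT
  | M'.+1 => ~` Wset Xi lam s t `&` Gs Xi lam s M' (t + lam + 1)%N
  end.

Lemma meas_Gs (R : realType) d (T : measurableType d) N (Xi : nat -> T -> 'M[R]_N) lam s M t :
  (forall k (M : 'M[R]_N), measurable [set w | Xi k w = M]) ->
  measurable (Gs Xi lam s M t).
Proof.
move=> hm; elim: M t => [|M IH] t /=; first exact: measurableT.
apply: measurableI => //; apply: measurableC; exact: meas_W.
Qed.

Lemma Gs_bound (R : realType) d (T : measurableType d) (P : probability T R) N
  (Xi : nat -> T -> 'M[R]_N) (X : seq 'M[R]_N) lam s (pmin : R) :
  (forall k (M : 'M[R]_N), measurable [set w | Xi k w = M]) ->
  (forall k w, Xi k w \in X) -> 0 <= pmin -> pmin <= 1 ->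
  (forall k (h : nat -> 'M[R]_N),
     (pmin%:E * P [set w | forall t, (t <= k)%N -> Xi t w = h t] <=
      P (Wset Xi lam s k `&` [set w | forall t, (t <= k)%N -> Xi t w = h t]))%E) ->
  forall M t F, measurable F -> detm Xi t F ->
  fine (P (F `&` Gs Xi lam s M t)) <= (1 - pmin) ^+ M * fine (P F).
Proof.
move=> hm hX p0 p1 A3; elim=> [|M IH] t F mF dF /=.
  by rewrite setIT expr0 mul1r.
have mW := meas_W lam s t hm.
have mF' : measurable (F `&` ~` Wset Xi lam s t) by apply: measurableI => //; apply: measurableC.
have dF' : detm Xi (t + lam + 1) (F `&` ~` Wset Xi lam s t).
  move=> w w' H [Fw nW]; split.
    by apply: (dF w) => // t' Ht'; apply: H; lia.
  move=> Ww'; apply: nW => r Hr; rewrite H; first exact: Ww'.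
  lia.
rewrite setIA.
apply: (le_trans (IH _ _ mF' dF')).
have H1 := window_prob hm hX p0 A3 mF dF.
have H2 : fine (P F) = fine (P (Wset Xi lam s t `&` F)) + fine (P (F `&` ~` Wset Xi lam s t)).
  rewrite -prU //; last 2 first.
  - by apply: measurableI.
  - by apply/seteqP; split => w //= [[Ww _] [_ nW]].
  congr (fine (P _)); rewrite setIC -setIUr setUv setIT //.
have H3 : 0 <= (1 - pmin) ^+ M by apply: exprn_ge0; lra.
rewrite exprSr -mulrA; apply: ler_wpM2l => //.
lra.
Qed.

Lemma as_windows (R : realType) d (T : measurableType d) (P : probability T R) N
  (Xi : nat -> T -> 'M[R]_N) (X : seq 'M[R]_N) lam s (pmin : R) :
  (forall k (M : 'M[R]_N), measurable [set w | Xi k w = M]) ->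
  (forall k w, Xi k w \in X) -> 0 < pmin -> pmin <= 1 ->
  (forall k (h : nat -> 'M[R]_N),
     (pmin%:E * P [set w | forall t, (t <= k)%N -> Xi t w = h t] <=
      P (Wset Xi lam s k `&` [set w | forall t, (t <= k)%N -> Xi t w = h t]))%E) ->
  exists E : set T, [/\ measurable E, P E = 1%E &
    forall w, E w -> forall t, exists t', (t <= t')%N /\ Wset Xi lam s t' w].
Proof.
move=> hm hX p0 p1 A3.
have null : forall t, P (\bigcap_M Gs Xi lam s M t) = 0%E.
  move=> t.
  have mA : measurable (\bigcap_M Gs Xi lam s M t).
    by apply: bigcapT_measurable => M; apply: meas_Gs.
  have x0 := pr_ge0 P (\bigcap_M Gs Xi lam s M t).
  have xM : forall M, fine (P (\bigcap_M Gs Xi lam s M t)) <= (1 - pmin) ^+ M.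
    move=> M; apply: (le_trans (pr_le P mA (meas_Gs lam s M t hm) _)).
      by move=> w Hw; apply: Hw.
    have := Gs_bound hm hX (ltW p0) p1 A3 M (t := t) (measurableT) (fun _ _ _ _ => I).
    by rewrite setTI probability_setT /= mulr1.
  rewrite (prE P mA).
  have [->//|xn] := eqVneq (fine (P (\bigcap_M Gs Xi lam s M t))) 0.
  have xp : 0 < fine (P (\bigcap_M Gs Xi lam s M t)) by rewrite lt_neqAle eq_sym xn.
  have [M HM] := geom_small (q := 1 - pmin) (delta := fine (P (\bigcap_M Gs Xi lam s M t)))
    (ltac:(apply/andP; split; lra)) xp.
  by have := lt_le_trans HM (xM M); rewrite ltxx.
have bad_sub : forall M t w, (forall t', (t <= t')%N -> ~ Wset Xi lam s t' w) ->
    Gs Xi lam s M t w.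
  elim=> [|M IH] t w H //=; split.
    by apply: H.
  by apply: IH => t' Ht'; apply: H; lia.
have negl : forall t, P.-negligible
    [set w | forall t', (t <= t')%N -> ~ Wset Xi lam s t' w].
  move=> t; exists (\bigcap_M Gs Xi lam s M t); split => //.
    by apply: bigcapT_measurable => M; apply: meas_Gs.
  by move=> w Hw M _; apply: bad_sub.
have [Z [mZ PZ sZ]] := negligible_bigcup negl.
exists (~` Z); split.
- exact: measurableC.
- by rewrite probability_setC // PZ sube0.
move=> w nZ t; apply: contrapT => Hn; apply: nZ; apply: sZ; exists t => // t' Ht' Wt.
by apply: Hn; exists t'.
Qed.

Lemma cmin_facts (R : realType) n (e : rel 'I_n) :
  0 < cmin R e <= 1 /\ forall j, cmin R e <= (1 + (outdeg e j)%:R)^-1.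
Proof.
split; last by move=> j; exact: bigmin_le.
rewrite /cmin; elim/big_ind: _.
- by rewrite ltr01 lexx.
- move=> x y /andP[x0 x1] /andP[y0 y1]; apply/andP; split.
    by rewrite lt_min x0 y0.
  by rewrite ge_min x1.
- move=> i _; have h : 0 < 1 + (outdeg e i)%:R :> R.
    by apply: (lt_le_trans ltr01); rewrite lerDl ler0n.
  by rewrite invr_gt0 h /= invf_le1 // lerDl ler0n.
Qed.


Unset Implicit Arguments. Set Strict Implicit. Set Printing Implicit Defensive.

Theorem theorem1 (R : realType) (d : measure_display) (T : measurableType d)
  (P : probability T R)
  (n : nat) (e : rel 'I_n)
  (m : nat) (* tilde n = n + m; the first n coordinates are the actual nodes *)
  (x0 : 'cV[R]_n)
  (Xi : nat -> T -> 'M[R]_(n + m))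
  (X : seq 'M[R]_(n + m)) :
  simple_digraph e ->
  strongly_connected e ->
  (* Xi[k] are random: the events {Xi[k] = M} are measurable *)
  (forall k (M : 'M[R]_(n + m)), measurable [set w | Xi k w = M]) ->
  (* (A1) *)
  (forall M, M \in X -> col_stochastic M /\ entries_ok e M) ->
  (forall k w, Xi k w \in X) ->
  (* (A2) and (A3): lam, s = [:: Xi_1; ...; Xi_lam], pmin *)
  forall (lam : nat) (s : seq 'M[R]_(n + m)) (pmin : R),
  (0 < lam)%N -> size s = lam -> all (fun M => M \in X) s -> 0 < pmin ->
  (* (A2): L = Xi_lam ... Xi_1 has positive rows for the actual nodes *)
  (forall (j : 'I_n) (i : 'I_(n + m)), 0 < lprod s (lshift m j) i) ->
  (* (A3): conditionally on any realized history Xi[0..k], the window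
     Xi[k+1..k+lam] = Xi_1..Xi_lam has probability >= pmin *)
  (forall (k : nat) (h : nat -> 'M[R]_(n + m)),
     let H := [set w | forall t, (t <= k)%N -> Xi t w = h t] in
     let W := [set w | forall r, (r < lam)%N ->
                        Xi (k + 1 + r)%N w = nth 0 s r] in
     (pmin%:E * P H <= P (W `&` H))%E) ->
  let c := cmin R e in
  let xt0 : 'cV[R]_(n + m) := col_mx x0 0 in
  let yt0 : 'cV[R]_(n + m) := col_mx (const_mx 1) 0 in
  let avg := n%:R^-1 * \sum_(i < n) x0 i 0 in
  exists E : set T, [/\ measurable E, P E = 1%E &
    forall w, E w -> forall j : 'I_n,
      let xt k := traj Xi xt0 k w (lshift m j) 0 in
      let yt k := traj Xi yt0 k w (lshift m j) 0 in
      let K := [set k | c ^+ lam <= yt k] in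
      (* K_j is infinite *)
      [/\ (forall N, exists k, (N <= k)%N /\ K k) &
      (* z_j[k] -> avg as k -> oo along K_j *)
      (forall eps : R, 0 < eps -> exists N, forall k, (N <= k)%N -> K k ->
          `|xt k / yt k - avg| < eps)]].
Proof.
move=> _ _ hm hX1 hX lam s pmin lam0 ss sX p0 hL A3 c xt0 yt0 avg.
set pm := Num.min pmin 1.
have pm0 : 0 < pm by rewrite lt_min p0 ltr01.
have pm1 : pm <= 1 by rewrite ge_min lexx orbT.
have A3' : forall k (h : nat -> 'M[R]_(n + m)),
    (pm%:E * P [set w | forall t, (t <= k)%N -> Xi t w = h t] <=
     P (Wset Xi lam s k `&` [set w | forall t, (t <= k)%N -> Xi t w = h t]))%E.
  move=> k h; have := A3 k h => /= H; apply: le_trans H.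
  by apply: lee_wpmul2r => //; rewrite lee_fin ge_min lexx.
have [E [mE PE HE]] := as_windows hm hX pm0 pm1 A3'.
exists E; split => // w Ew j.
have [/andP[c0 c1] cle] := @cmin_facts R n e.
have Acs : forall t, col_stochastic (Xi t w) by move=> t; exact: (hX1 _ (hX t w)).1.
have sM : forall M, M \in s -> col_stochastic M /\ nzge M c.
  move=> M HM; have [h1 h2] := hX1 M (allP sX M HM); split => // a b.
  case: (h2 a b) => [->|[->|[j' ->]]]; [by left|by right|by right; apply: cle].
have [Lcs Lnz] := @nzge_lprod R (n + m) s c (ltW c0) sM.
rewrite ss in Lnz.
have Lb : forall i, c ^+ lam <= lprod s (lshift m j) i.
  move=> i; case: (Lnz (lshift m j) i) => [H|//]; have := hL j i; by rewrite H ltxx.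
have Hw : forall t, exists t', (t <= t')%N /\ prodM (fun t => Xi t w) t'.+1 lam = lprod s.
  move=> t; have [t' [Ht' Wt]] := HE w Ew t; exists t'; split => //.
  rewrite -ss (lprod_prodM (A := fun t => Xi t w) (a := t'.+1)) // => r Hr; rewrite -addn1; apply: Wt.
  by rewrite -ss.
have b0 : 0 < c ^+ lam by apply: exprn_gt0.
have b1 : c ^+ lam <= 1 by apply: exprn_ile1 => //; exact: ltW.
have [H1 H2] := final_conv x0 b0 b1 Acs Lcs Lb Hw.
split.
  move=> N0; have [k [Hk Hy]] := H1 N0; exists k; split => //.
  by rewrite /= traj_prodM.
move=> eps e0; have [N HN] := H2 eps e0; exists N => k Hk Hy.
rewrite /= !traj_prodM; apply: HN => //.
by move: Hy; rewrite /= traj_prodM.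
Qed.
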